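(* Let $\Gamma=(V,E)$ be a graph without isolated vertices and let $k\le 1$ be an integer. If $S$ is a minimal global offensive $k$-alliance in $\Gamma$, then $\overline{S}=V\setminus S$ is a dominating set in $\Gamma$.
   Context: Graphs are finite and simple. For $S\subseteq V$ and $v\in V$, $\delta_S(v)$ is the number of neighbours of $v$ in $S$, $\overline{S}=V\setminus S$, and $\partial(S)$ the set of vertices of $\overline{S}$ with a neighbour in $S$. A nonempty $S$ is an offensive $k$-alliance if $\delta_S(v)\ge\delta_{\overline{S}}(v)+k$ for all $v\in\partial(S)$, and a global offensive $k$-alliance if moreover it is dominating (every vertex of $\overline{S}$ has a neighbour in $S$). A global offensive $k$-alliance $S$ is minimal if no proper subset of $S$ is a global offensive $k$-alliance. *)

(* Defs.v *)
From mathcomp Require Import all_boot all_order all_algebra.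
Set Implicit Arguments. Unset Strict Implicit. Unset Printing Implicit Defensive.
Import GRing.Theory Num.Theory.

Definition simple_graph (T : finType) (e : rel T) : Prop :=
  symmetric e /\ irreflexive e.

Definition no_isolated (T : finType) (e : rel T) : Prop :=
  forall v : T, exists u : T, e v u.

Definition deg_in (T : finType) (e : rel T) (S : {set T}) (v : T) : nat :=
  #|[set u in S | e v u]|.

Definition boundary (T : finType) (e : rel T) (S : {set T}) : {set T} :=
  [set v in ~: S | [exists u in S, e v u]].

Definition dominating (T : finType) (e : rel T) (D : {set T}) : Prop :=
  forall v : T, v \notin D -> exists2 u, u \in D & e v u.

Definition offensive_alliance (T : finType) (e : rel T) (k : int) (S : {set T}) : Prop :=
  S != set0 /\
  forall v, v \in boundary e S ->
    ((deg_in e S v)%:Z >= (deg_in e (~: S) v)%:Z + k)%R.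

Definition global_offensive_alliance (T : finType) (e : rel T) (k : int) (S : {set T}) : Prop :=
  offensive_alliance e k S /\ dominating e S.

Definition minimal_global_offensive_alliance (T : finType) (e : rel T) (k : int) (S : {set T}) : Prop :=
  global_offensive_alliance e k S /\
  forall S' : {set T}, S' \proper S -> ~ global_offensive_alliance e k S'.

(* Main.v *)
Require Import Defs.
From mathcomp Require Import all_boot all_order all_algebra.
Import Order.TTheory GRing.Theory Num.Theory.

Theorem mainTheorem8 (T : finType) (e : rel T) (k : int) (S : {set T}) :
  simple_graph e -> no_isolated e -> (k <= 1)%R ->
  minimal_global_offensive_alliance e k S ->
  dominating e (~: S).
Proof.
move=> [esym eirr] noiso k1 [[[S0 Hoff] Hdom] Hmin] v.
rewrite inE negbK => vS.
case: (boolP [exists u, (u \in ~: S) && e v u]).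
  by case/existsP=> u /andP[? ?]; exists u.
rewrite negb_exists => /forallP Hn.
have nS : forall u, e v u -> u \in S.
  move=> u evu; have := Hn u; rewrite evu andbT inE negbK; done.
exfalso.
have [u evu] := noiso v.
have uv : u != v by apply/eqP => uv; rewrite uv eirr in evu.
have uS' : u \in S :\ v by rewrite !inE uv nS.
apply: (Hmin (S :\ v)).
  by rewrite properD1.
split; last first.
  move=> w; rewrite !inE negb_and negbK.
  case/orP=> [/eqP -> | wS]; first by exists u.
  have [x xS ewx] := Hdom w wS.
  exists x => //; rewrite !inE xS andbT.
  apply/eqP => xv; move: ewx; rewrite xv esym => /nS; by rewrite (negPf wS).
split; first by apply/set0Pn; exists u.
move=> w; rewrite inE => /andP[]; rewrite !inE negb_and negbK.
case/orP=> [/eqP -> _ | wS].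
  rewrite /deg_in.
  have -> : [set x in ~: (S :\ v) | e v x] = set0.
    apply/setP=> x; rewrite !inE negb_and negbK.
    case: (boolP (e v x)) => evx; last by rewrite andbF.
    by rewrite (nS _ evx) orbF andbT; apply/eqP => xv; rewrite xv eirr in evx.
  rewrite cards0 add0r.
  apply: (le_trans k1).
  rewrite lez_nat card_gt0; apply/set0Pn; exists u; by rewrite !inE uv nS.
case/existsP=> x /andP[xS' ewx].
have nwv : ~~ e w v.
  apply/negP; rewrite esym => /nS; by rewrite (negPf wS).
have E1 : deg_in e (S :\ v) w = deg_in e S w.
  rewrite /deg_in; apply: eq_card => y; rewrite !inE.
  case: (eqVneq y v) => [-> | //]; by rewrite (negPf nwv) !andbF.
have E2 : deg_in e (~: (S :\ v)) w = deg_in e (~: S) w.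
  rewrite /deg_in; apply: eq_card => y; rewrite !inE.
  case: (eqVneq y v) => [-> | //]; by rewrite (negPf nwv) !andbF.
rewrite E1 E2; apply: Hoff.
rewrite !inE wS /=; apply/existsP; exists x; move: xS'; rewrite !inE => /andP[_ ->].
by rewrite ewx.
Qed.
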